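(* Let $\mathcal P_X$ and $\mathcal P_Y$ be probability measures on a common measurable space $(E,\mathcal E)$ with $\mathcal P_Y\ll\mathcal P_X$, and let $L=d\mathcal P_Y/d\mathcal P_X$ be the Radon–Nikodym derivative. Assume that $L(\mathbf Z)$ has a continuous distribution when $\mathbf Z\sim\mathcal P_X$. Let $\mathbf Z_X\sim\mathcal P_X$ and $\mathbf Z_Y\sim\mathcal P_Y$ be independent. Then $$\tfrac12\, d_{tv}(\mathcal P_X,\mathcal P_Y)\;\le\;\mathbb P\big(L(\mathbf Z_X)<L(\mathbf Z_Y)\big)-\tfrac12\;\le\; d_{tv}(\mathcal P_X,\mathcal P_Y).$$
   Context: $d_{tv}(\mathcal P_X,\mathcal P_Y)=\sup_{A\in\mathcal E}|\mathcal P_Y(A)-\mathcal P_X(A)|$ denotes the total variation distance. *)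

(* Defs.v *)
From HB Require Import structures.
From mathcomp Require Import all_boot all_order all_algebra.
From mathcomp Require Import all_classical all_reals all_analysis.
Set Implicit Arguments. Unset Strict Implicit. Unset Printing Implicit Defensive.
Import Order.TTheory GRing.Theory Num.Theory.
Local Open Scope classical_set_scope.
Local Open Scope ring_scope.
Local Open Scope ereal_scope.

Definition dtv (d : measure_display) (T : measurableType d) (R : realType)
  (PX PY : probability T R) : \bar R :=
  ereal_sup [set `|PY A - PX A| | A in [set A : set T | measurable A]].

(* Main.v *)
Require Import Defs.
From HB Require Import structures.
From mathcomp Require Import all_boot all_order all_algebra.
From mathcomp Require Import all_classical all_reals all_analysis.
From mathcomp Require Import ring lra.
From mathcomp Require Import measurable_realfun.
Import Order.TTheory GRing.Theory Num.Theory.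
Local Open Scope classical_set_scope.
Local Open Scope ring_scope.
Local Open Scope ereal_scope.

Section Prop1.
Context (d : measure_display) (T : measurableType d) (R : realType)
  (PX PY : probability T R) (L : T -> R).
Hypothesis hLmeas : measurable_fun setT L.
Hypothesis hLge0 : forall z, (0 <= L z)%R.
Hypothesis hRN : forall A, measurable A -> PY A = \int[PX]_(z in A) (L z)%:E.
Hypothesis hcont : forall r : R, PX (L @^-1` [set r]) = 0.

Lemma maxr0E (r : R) : Num.max r 0%R = if (0 <= r)%R then r else 0%R.
Proof. by rewrite maxEle; case: (leP r 0%R) => h; case: (leP 0%R r) => h'; lra. Qed.

Definition g1 x : R := Num.max (L x - 1)%R 0%R.
Definition g2 x : R := Num.max (1 - L x)%R 0%R.
Let D1 := \int[PX]_x (g1 x)%:E.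
Let D2 := \int[PX]_x (g2 x)%:E.

Lemma mDm1 : measurable_fun setT (fun x => (g1 x)%:E).
Proof.
apply/measurable_EFinP; apply: measurable_maxr; last exact: measurable_cst.
by apply: measurable_funB => //; exact: measurable_cst.
Qed.

Lemma mDm2 : measurable_fun setT (fun x => (g2 x)%:E).
Proof.
apply/measurable_EFinP; apply: measurable_maxr; last exact: measurable_cst.
by apply: measurable_funB => //; exact: measurable_cst.
Qed.

Lemma mLE : measurable_fun setT (fun x => (L x)%:E).
Proof. exact/measurable_EFinP. Qed.

Lemma intL : \int[PX]_x (L x)%:E = 1.
Proof. by rewrite -hRN // probability_setT. Qed.

Lemma int1 (B : set T) : measurable B -> \int[PX]_(x in B) (1%:E) = PX B.
Proof. move=> mB; by rewrite (integral_cst PX mB 1) mul1e. Qed.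

Lemma D12 : D1 = D2.
Proof.
have h : \int[PX]_x ((g1 x)%:E + 1%:E) =
         \int[PX]_x ((L x)%:E + (g2 x)%:E).
  apply: eq_integral => x _; rewrite -!EFinD; congr EFin.
  rewrite /g1 /g2 !maxr0E; case: ifP => h1; case: ifP => h2; lra.
have g10 : forall x, [set: T] x -> 0 <= (g1 x)%:E.
  by move=> x _; rewrite lee_fin /g1 le_max lexx orbT.
have g20 : forall x, [set: T] x -> 0 <= (g2 x)%:E.
  by move=> x _; rewrite lee_fin /g2 le_max lexx orbT.
have L0 : forall x, [set: T] x -> 0 <= (L x)%:E by move=> x _; rewrite lee_fin.
have c10 : forall x : T, [set: T] x -> 0 <= 1%:E :> \bar R by move=> x _; rewrite lee_fin.
move: h; rewrite (ge0_integralD PX measurableT g10 mDm1 c10 (measurable_cst _)).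
rewrite (ge0_integralD PX measurableT L0 mLE g20 mDm2).
rewrite int1 // probability_setT intL => h.
move: (congr1 (fun t => t - 1) h) => /=.
by rewrite addeK // [1 + _]addeC addeK.
Qed.

Lemma g10 x : (0 <= g1 x)%R. Proof. by rewrite /g1 le_max lexx orbT. Qed.
Lemma g20 x : (0 <= g2 x)%R. Proof. by rewrite /g2 le_max lexx orbT. Qed.

Lemma D1ge0 : 0 <= D1.
Proof. by apply: integral_ge0 => x _; rewrite lee_fin g10. Qed.

Lemma D1fin : D1 \is a fin_num.
Proof.
rewrite ge0_fin_numE ?D1ge0 //; apply: (@le_lt_trans _ _ 1); last exact: ltey.
rewrite -intL; apply: ge0_le_integral => //.
- by move=> x _; rewrite lee_fin g10.
- exact: mDm1.
- exact: mLE.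
- move=> x _; rewrite lee_fin /g1 ge_max; apply/andP; split => //.
  by rewrite lerBlDr lerDl.
Qed.

Lemma int_sub (B : set T) (f : T -> R) : measurable B ->
  measurable_fun setT (fun x => (f x)%:E) -> (forall x, (0 <= f x)%R) ->
  \int[PX]_(x in B) (f x)%:E <= \int[PX]_x (f x)%:E.
Proof.
move=> mB mf f0; apply: ge0_subset_integral => //.
by move=> x _; rewrite lee_fin.
Qed.

Lemma intD (B : set T) (f g : T -> R) : measurable B ->
  measurable_fun setT (fun x => (f x)%:E) -> measurable_fun setT (fun x => (g x)%:E) ->
  (forall x, (0 <= f x)%R) -> (forall x, (0 <= g x)%R) ->
  \int[PX]_(x in B) ((f x)%:E + (g x)%:E) =
  \int[PX]_(x in B) (f x)%:E + \int[PX]_(x in B) (g x)%:E.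
Proof.
move=> mB mf mg f0 g0; apply: ge0_integralD => //.
- by move=> x _; rewrite lee_fin.
- exact: measurable_funTS.
- by move=> x _; rewrite lee_fin.
- exact: measurable_funTS.
Qed.
Arguments intD [B f g].

Lemma finE (x : \bar R) : x \is a fin_num -> exists r : R, x = r%:E.
Proof. by move=> h; exists (fine x); rewrite fineK. Qed.
Arguments finE [x].

Lemma dtvE : dtv PX PY = D1.
Proof.
have mgB (B : set T) (f : T -> R) : measurable B ->
    measurable_fun setT (fun x => (f x)%:E) -> measurable_fun B (fun x => (f x)%:E).
  by move=> mB mf; apply: measurable_funTS.
apply/eqP; rewrite eq_le; apply/andP; split.
- apply: ge_ereal_sup => _ [B mB <-].
  have h1 : PY B <= D1 + PX B.
    rewrite hRN // -int1 //.
    have le1 : \int[PX]_(x in B) (L x)%:E <= \int[PX]_(x in B) ((g1 x)%:E + 1%:E).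
      apply: (ge0_le_integral PX mB).
      + by move=> x _; rewrite lee_fin.
      + exact: mgB mB mLE.
      + apply: emeasurable_funD; [exact: mgB mB mDm1| exact: measurable_cst].
      + move=> x _; rewrite -EFinD lee_fin /g1 -lerBlDr; by rewrite le_max lexx.
    apply: le_trans le1 _.
    rewrite (intD mB mDm1 (measurable_cst (1%:E : \bar R)) g10) //.
    apply: leeD2r; apply: int_sub => //; [exact: mDm1|exact: g10].
  have h2 : PX B <= PY B + D1.
    rewrite hRN // -int1 // D12.
    have le1 : \int[PX]_(x in B) 1%:E <= \int[PX]_(x in B) ((L x)%:E + (g2 x)%:E).
      apply: (ge0_le_integral PX mB).
      + by move=> x _; rewrite lee_fin.
      + exact: measurable_cst.
      + apply: emeasurable_funD; [exact: mgB mB mLE| exact: mgB mB mDm2].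
      + move=> x _; rewrite -EFinD lee_fin /g2 addrC -lerBlDr; by rewrite le_max lexx.
    apply: le_trans le1 _.
    rewrite (intD mB mLE mDm2 hLge0 g20).
    apply: leeD2l; apply: int_sub => //; [exact: mDm2|exact: g20].
  have [p ep] := finE (fin_num_measure PX B mB).
  have [q eq] := finE (fin_num_measure PY B mB).
  have [r er] := finE D1fin.
  move: h1 h2; rewrite ep eq er -!EFinD abse_EFin !lee_fin => h1 h2.
  by rewrite ler_norml; apply/andP; split; lra.
- apply: ereal_sup_ubound.
  pose B := [set x | (1 < L x)%R].
  have mB : measurable B.
    have -> : B = setT `&` L @^-1` `]1%R, +oo[.
      by rewrite setTI; apply/seteqP; split => x; rewrite /B /preimage /= in_itv /= andbT.
    by apply: hLmeas => //; exact: measurable_itv.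
  exists B => //.
  have hD : D1 = \int[PX]_(x in B) (L x - 1)%:E.
    rewrite [RHS]integral_mkcond; apply: eq_integral => x _.
    rewrite patchE /g1; case: ifPn => [/set_mem h|h].
      by rewrite max_l // subr_ge0 ltW.
    have h' : ~~ (1 < L x)%R by apply/negP => H; move/negP: h; apply; apply/mem_set.
    by rewrite max_r // subr_le0 leNgt.
  have hB : PY B = D1 + PX B.
    have f10 : forall x, B x -> 0 <= (L x - 1)%:E.
      by move=> x /= h; rewrite lee_fin subr_ge0 ltW.
    have mf1 : measurable_fun B (fun x => (L x - 1)%:E).
      apply: mgB mB _; apply/measurable_EFinP; apply: measurable_funB => //.
    have f20 : forall x, B x -> 0 <= (fun=> 1%:E : \bar R) x by move=> x _; rewrite lee_fin.
    rewrite hRN // -int1 // hD -(ge0_integralD PX mB f10 mf1 f20 (measurable_cst _)).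
    by apply: eq_integral => x _; rewrite -EFinD subrK.
  have [p ep] := finE (fin_num_measure PX B mB).
  have [r er] := finE D1fin.
  have r0 : (0 <= r)%R by rewrite -lee_fin -er D1ge0.
  by rewrite hB ep er -EFinD abse_EFin addrK ger0_norm.
Qed.

Lemma intDT d' (U : measurableType d') (mu : {measure set U -> \bar R}) (f g : U -> R) :
  measurable_fun setT f -> measurable_fun setT g ->
  (forall x, (0 <= f x)%R) -> (forall x, (0 <= g x)%R) ->
  \int[mu]_x ((f x)%:E + (g x)%:E) = \int[mu]_x (f x)%:E + \int[mu]_x (g x)%:E.
Proof.
move=> mf mg f0 g0.
have mf' : measurable_fun setT (fun z => (f z)%:E) by exact/measurable_EFinP.
have mg' : measurable_fun setT (fun z => (g z)%:E) by exact/measurable_EFinP.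
have f0' : forall z, setT z -> 0 <= (f z)%:E by move=> z; rewrite lee_fin.
have g0' : forall z, setT z -> 0 <= (g z)%:E by move=> z; rewrite lee_fin.
exact: (ge0_integralD mu measurableT f0' mf' g0' mg').
Qed.
Arguments intDT [d' U] mu [f g].

Lemma ton1 (f : T * T -> R) : measurable_fun setT f -> (forall z, (0 <= f z)%R) ->
  \int[PX \x PX]_z (f z)%:E = \int[PX]_x \int[PX]_y (f (x, y))%:E.
Proof.
move=> mf f0.
have mf' : measurable_fun setT (fun z => (f z)%:E) by exact/measurable_EFinP.
have f0' : forall z, 0 <= (f z)%:E by move=> z; rewrite lee_fin.
by rewrite (fubini_tonelli1 _ mf' f0').
Qed.
Arguments ton1 [f].

Lemma ton2 (f : T * T -> R) : measurable_fun setT f -> (forall z, (0 <= f z)%R) ->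
  \int[PX \x PX]_z (f z)%:E = \int[PX]_y \int[PX]_x (f (x, y))%:E.
Proof.
move=> mf f0.
have mf' : measurable_fun setT (fun z => (f z)%:E) by exact/measurable_EFinP.
have f0' : forall z, 0 <= (f z)%:E by move=> z; rewrite lee_fin.
by rewrite (fubini_tonelli2 _ mf' f0').
Qed.
Arguments ton2 [f].

Lemma mL1 : measurable_fun setT (fun z : T * T => L z.1).
Proof. exact: measurableT_comp hLmeas measurable_fst. Qed.
Lemma mL2 : measurable_fun setT (fun z : T * T => L z.2).
Proof. exact: measurableT_comp hLmeas measurable_snd. Qed.

Definition A := [set z : T * T | (L z.1 < L z.2)%R].
Definition A' := [set z : T * T | (L z.2 < L z.1)%R].
Definition N := [set z : T * T | (L z.1 != L z.2)%R].

Lemma mA : measurable A.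
Proof.
have h := measurable_fun_ltr mL1 mL2 measurableT (Y := [set true]) ltac:(by []).
rewrite setTI in h; exact: h.
Qed.
Lemma mA' : measurable A'.
Proof.
have h := measurable_fun_ltr mL2 mL1 measurableT (Y := [set true]) ltac:(by []).
rewrite setTI in h; exact: h.
Qed.
Lemma mN : measurable N.
Proof.
have -> : N = A `|` A'.
  apply/seteqP; split => z /=; rewrite /A /A' /N /=.
    by rewrite neq_lt => /orP.
  by case => h; [rewrite lt_eqF | rewrite gt_eqF].
by apply: measurableU; [exact: mA|exact: mA'].
Qed.

Lemma indE (U : Type) (S : set U) z : (\1_S z : R) = (if z \in S then 1 else 0)%R.
Proof. by rewrite indicE; case: (z \in S). Qed.

Lemma inA z : (z \in A) = (L z.1 < L z.2)%R.
Proof. by apply/idP/idP => [/set_mem //|h]; apply/mem_set. Qed.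
Lemma inA' z : (z \in A') = (L z.2 < L z.1)%R.
Proof. by apply/idP/idP => [/set_mem //|h]; apply/mem_set. Qed.
Lemma inN z : (z \in N) = (L z.1 != L z.2)%R.
Proof. by apply/idP/idP => [/set_mem //|h]; apply/mem_set. Qed.

Definition fP z := (\1_A z * L z.2)%R.
Definition fQ z := (\1_A z * L z.1)%R.
Definition fP' z := (\1_A' z * L z.1)%R.
Definition fS z := Num.max (L z.2 - L z.1)%R 0%R.

Lemma mfP : measurable_fun setT fP.
Proof. apply: measurable_funM; [exact: measurable_indic mA|exact: mL2]. Qed.
Lemma mfQ : measurable_fun setT fQ.
Proof. apply: measurable_funM; [exact: measurable_indic mA|exact: mL1]. Qed.
Lemma mfP' : measurable_fun setT fP'.
Proof. apply: measurable_funM; [exact: measurable_indic mA'|exact: mL1]. Qed.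
Lemma mfS : measurable_fun setT fS.
Proof.
apply: measurable_maxr; last exact: measurable_cst.
apply: measurable_funB; [exact: mL2|exact: mL1].
Qed.

Lemma ind0 (S : set (T * T)) z : (0 <= (\1_S z : R))%R.
Proof. by rewrite indE; case: ifP. Qed.

Lemma fP0 z : (0 <= fP z)%R. Proof. by rewrite /fP mulr_ge0 ?ind0. Qed.
Lemma fQ0 z : (0 <= fQ z)%R. Proof. by rewrite /fQ mulr_ge0 ?ind0. Qed.
Lemma fP'0 z : (0 <= fP' z)%R. Proof. by rewrite /fP' mulr_ge0 ?ind0. Qed.
Lemma fS0 z : (0 <= fS z)%R. Proof. by rewrite /fS le_max lexx orbT. Qed.

Let IP := \int[PX \x PX]_z (fP z)%:E.
Let IQ := \int[PX \x PX]_z (fQ z)%:E.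
Let IS := \int[PX \x PX]_z (fS z)%:E.

Lemma pE : (PX \x PY) A = IP.
Proof.
rewrite /IP (ton1 mfP fP0).
rewrite /product_measure1 /=; apply: eq_integral => x _.
rewrite hRN; last exact: measurable_xsection mA.
rewrite integral_mkcond; apply: eq_integral => y _.
rewrite patchE mem_xsection /fP indE /=.
by case: ifP => _; rewrite ?mul1r ?mul0r.
Qed.

Lemma e2 : IP = IQ + IS.
Proof.
rewrite /IP /IQ /IS -(intDT _ mfQ mfS fQ0 fS0); apply: eq_integral => z _.
rewrite -EFinD; congr EFin.
rewrite /fP /fQ /fS indE inA maxr0E.
have [h|h] := ltP (L z.1) (L z.2); rewrite ?mul1r ?mul0r;
  case: (leP 0%R (L z.2 - L z.1)%R) => h'; lra.
Qed.

Let IP' := \int[PX \x PX]_z (fP' z)%:E.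

Lemma ePP' : IP = IP'.
Proof.
rewrite /IP (ton2 mfP fP0) /IP' (ton1 mfP' fP'0).
apply: eq_integral => y _; apply: eq_integral => x _.
by rewrite /fP /fP' !indE inA inA' /=.
Qed.

Definition fN z := (\1_N z * L z.1)%R.
Lemma mfN : measurable_fun setT fN.
Proof. apply: measurable_funM; [exact: measurable_indic mN|exact: mL1]. Qed.
Lemma fN0 z : (0 <= fN z)%R. Proof. by rewrite /fN mulr_ge0 ?ind0. Qed.

Lemma e3 : IP + IQ = 1.
Proof.
rewrite ePP' addeC /IQ /IP' -(intDT _ mfQ mfP' fQ0 fP'0).
rewrite (_ : \int[_]_z _ = \int[PX \x PX]_z (fN z)%:E); last first.
  apply: eq_integral => z _; rewrite -EFinD; congr EFin.
  rewrite /fQ /fP' /fN !indE inA inA' inN.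
  have [h|h|h] := ltgtP (L z.1) (L z.2); rewrite /= ?mul1r ?mul0r; lra.
rewrite (ton1 mfN fN0) -intL; apply: eq_integral => x _.
have eN : xsection N x = ~` (L @^-1` [set L x]).
  apply/seteqP; split => y /=.
    by rewrite /xsection /= inN /= => /eqP h h'; apply: h; rewrite h'.
  by rewrite /xsection /= inN /= => h; apply/eqP => h'; apply: h; rewrite h'.
have mS : measurable (xsection N x) by exact: measurable_xsection mN.
rewrite (_ : (fun y => _) = (fun y => (L x)%:E * (\1_(xsection N x) y)%:E)); last first.
  by apply/funext => y; rewrite -EFinM /fN !indE mem_xsection /= mulrC.
have mi : measurable_fun setT (fun y => (\1_(xsection N x) y : R)%:E).
  exact/measurable_EFinP/measurable_indic.
have i0 : forall y, setT y -> 0 <= (\1_(xsection N x) y : R)%:E.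
  by move=> y _; rewrite lee_fin indE; case: ifP.
rewrite (ge0_integralZl PX measurableT mi i0); last by rewrite lee_fin.
have mpre : measurable (L @^-1` [set L x]).
  by rewrite -[X in measurable X]setTI; apply: hLmeas.
rewrite integral_indic // setIT eN.
have hC : PX (~` (L @^-1` [set L x])) = 1.
  by rewrite (probability_setC PX mpre) hcont sube0.
by rewrite -[RHS]mule1; congr (_ * _); exact: hC.
Qed.

Lemma mg1 : measurable_fun setT g1.
Proof.
apply: measurable_maxr; last exact: measurable_cst.
by apply: measurable_funB => //; exact: measurable_cst.
Qed.
Lemma mg2 : measurable_fun setT g2.
Proof.
apply: measurable_maxr; last exact: measurable_cst.
by apply: measurable_funB => //; exact: measurable_cst.
Qed.

Lemma intcst (c : \bar R) : \int[PX]_x c = c.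
Proof.
rewrite (integral_cst PX measurableT c) -[RHS]mule1; congr (_ * _).
exact: probability_setT.
Qed.

Lemma e4 : IS <= D1 + D1.
Proof.
have m1 : measurable_fun setT (fun z : T * T => g1 z.2).
  exact: measurableT_comp mg1 measurable_snd.
have m2 : measurable_fun setT (fun z : T * T => g2 z.1).
  exact: measurableT_comp mg2 measurable_fst.
have le : IS <= \int[PX \x PX]_z ((g1 z.2)%:E + (g2 z.1)%:E).
  have mfS' : measurable_fun setT (fun z => (fS z)%:E).
    by apply/measurable_EFinP; exact: mfS.
  have m12 : measurable_fun setT (fun z : T * T => (g1 z.2)%:E + (g2 z.1)%:E).
    by apply: emeasurable_funD; apply/measurable_EFinP.
  have fS0' : forall z, setT z -> 0 <= (fS z)%:E by move=> z _; rewrite lee_fin fS0.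
  apply: (ge0_le_integral (PX \x PX) measurableT fS0' mfS' m12).
  move=> z _; rewrite -EFinD lee_fin /fS /g1 /g2 !maxr0E.
  case: (leP 0%R (L z.2 - L z.1)%R) => h1; case: (leP 0%R (L z.2 - 1)%R) => h2;
  case: (leP 0%R (1 - L z.1)%R) => h3; lra.
apply: le_trans le _.
rewrite (intDT (PX \x PX) m1 m2 (fun z => g10 z.2) (fun z => g20 z.1)).
rewrite (ton1 m1 (fun z => g10 z.2)) (ton2 m2 (fun z => g20 z.1)) /=.
by rewrite !intcst -/D1 -/D2 D12.
Qed.

Lemma e5 : D1 <= IS.
Proof.
rewrite /IS (ton2 mfS fS0).
have mf' : measurable_fun setT (fun z => (fS z)%:E).
  by apply/measurable_EFinP; exact: mfS.
have f0' : forall z, 0 <= (fS z)%:E by move=> z; rewrite lee_fin fS0.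
have mG := measurable_fun_fubini_tonelli_G (m1 := PX) _ mf' f0'.
have g10' : forall y, setT y -> 0 <= (g1 y)%:E by move=> y _; rewrite lee_fin g10.
apply: (ge0_le_integral PX measurableT g10' mDm1 mG).
move=> y _; change ((g1 y)%:E <= \int[PX]_x (fS (x, y))%:E).
have mh : measurable_fun setT (fun x => fS (x, y)).
  apply: measurable_maxr; last exact: measurable_cst.
  by apply: measurable_funB => //=; exact: measurable_cst.
have hs : (L y)%:E <= \int[PX]_x (fS (x, y))%:E + 1.
  rewrite -intL -(intDT PX mh hLmeas (fun x => fS0 (x, y)) hLge0).
  rewrite -[X in X <= _](intcst (L y)%:E).
  have c0 : forall x : T, setT x -> 0 <= (L y)%:E by move=> x _; rewrite lee_fin.
  have m12 : measurable_fun setT (fun x => (fS (x, y))%:E + (L x)%:E).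
    by apply: emeasurable_funD; apply/measurable_EFinP.
  apply: (ge0_le_integral PX measurableT c0 (measurable_cst _) m12).
  move=> x _; rewrite -EFinD lee_fin /fS maxr0E /=.
  case: (leP 0%R (L y - L x)%R) => h; lra.
have s0 : 0 <= \int[PX]_x (fS (x, y))%:E.
  by apply: integral_ge0 => x _; rewrite lee_fin fS0.
move: hs s0; case: (\int[PX]_x (fS (x, y))%:E) => [r||] h1 h2 //; try by rewrite leey.
move: h1 h2; rewrite -EFinD !lee_fin /g1 => h1 h2.
by rewrite /g1 ge_max; apply/andP; split; lra.
Qed.

Lemma main : (2^-1)%:E * dtv PX PY <= (PX \x PY) [set zz | (L zz.1 < L zz.2)%R] - (2^-1)%:E
  /\ (PX \x PY) [set zz | (L zz.1 < L zz.2)%R] - (2^-1)%:E <= dtv PX PY.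
Proof.
have -> : [set zz | (L zz.1 < L zz.2)%R] = A by [].
rewrite dtvE pE.
have E2 := e2; have E3 := e3; have E4 := e4; have E5 := e5.
have Q0 : 0 <= IQ by apply: integral_ge0 => z _; rewrite lee_fin fQ0.
have S0 : 0 <= IS by apply: integral_ge0 => z _; rewrite lee_fin fS0.
have [r er] := finE D1fin.
have Sfin : IS \is a fin_num.
  by rewrite ge0_fin_numE // (le_lt_trans E4) // er -EFinD ltey.
have [s es] := finE Sfin.
have Qfin : IQ \is a fin_num.
  rewrite ge0_fin_numE // (@le_lt_trans _ _ 1) ?ltey //.
  by rewrite -E3 leeDr // E2 adde_ge0.
have [q eQ] := finE Qfin.
clearbody IP IQ IS; subst IP.
 rewrite er es eQ in E3 E4 E5 *.
have H3 : (q + s + q = 1)%R by apply: EFin_inj; rewrite !EFinD.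
rewrite -EFinD lee_fin in E4; rewrite lee_fin in E5.
rewrite -EFinM -!EFinN -!EFinD !lee_fin; split; lra.
Qed.
End Prop1.

Theorem proposition1 (d : measure_display) (T : measurableType d) (R : realType)
  (PX PY : probability T R) (L : T -> R)
  (hac : PY `<< PX)
  (hLmeas : measurable_fun setT L)
  (hLge0 : forall z, (0 <= L z)%R)
  (hRN : forall A, measurable A -> PY A = \int[PX]_(z in A) (L z)%:E)
  (hcont : forall r : R, PX (L @^-1` [set r]) = 0) :
  (2^-1)%:E * dtv PX PY <= (PX \x PY) [set zz | (L zz.1 < L zz.2)%R] - (2^-1)%:E
  /\ (PX \x PY) [set zz | (L zz.1 < L zz.2)%R] - (2^-1)%:E <= dtv PX PY.
Proof. exact: (@main d T R PX PY L hLmeas hLge0 hRN hcont). Qed.
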